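(* Let $q$ be a prime power, $n=q^2-1$, and let $x\in\{0,\ldots,n-1\}$ be the minimal representative of its cyclotomic coset $I_x$. Then: $I_x$ is an FR-asymmetric coset if and only if $n-xq>x$; $I_x$ is a symmetric coset if and only if $n-xq=x$; $I_x$ is an SR-asymmetric coset if and only if $n-xq<x$ (where $n-xq$ denotes the residue of $-xq$ modulo $n$ in $\{0,\ldots,n-1\}$).
   Context: Identify $\mathbb{Z}_n$ with $\{0,\ldots,n-1\}$. The cyclotomic coset of $x$ with respect to $q$ is $I_x=\{x,\,xq\bmod n\}$; its minimal representative is its least element. The (Euclidean) reciprocal coset of $I_x$ is $I_{n-x}$ (equivalently $I_{n-qx}$). $I_x$ is symmetric if $I_{n-x}=I_x$, and asymmetric otherwise. If $I_x$ is asymmetric with reciprocal coset $I_y$, where $x,y$ are the minimal representatives and $x<y$, then $I_x$ is called the FR-asymmetric coset and $I_y$ the SR-asymmetric coset of the pair. *)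

(* Defs.v *)
From mathcomp Require Import all_boot.
Set Implicit Arguments. Unset Strict Implicit. Unset Printing Implicit Defensive.

(* Z_n is identified with {0,...,n-1} (nat residues). *)

Definition prime_power (q : nat) : Prop :=
  exists p k, prime p /\ 0 < k /\ q = p ^ k.

Definition cyc_coset (n q x : nat) : pred nat :=
  fun y => (y == x %% n) || (y == (x * q) %% n).

Definition min_rep (n q x : nat) : Prop :=
  x < n /\ forall y, y \in cyc_coset n q x -> x <= y.

(* representative n - x of the reciprocal coset I_{n-x}, taken in Z_n *)
Definition recip (n x : nat) : nat := (n - x %% n) %% n.

Definition symmetric_coset (n q x : nat) : Prop :=
  cyc_coset n q (recip n x) =i cyc_coset n q x.

Definition asymmetric_coset (n q x : nat) : Prop := ~ symmetric_coset n q x.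

(* for x the minimal representative of I_x *)
Definition FR_asymmetric (n q x : nat) : Prop :=
  asymmetric_coset n q x /\
  exists y, min_rep n q y /\ cyc_coset n q y =i cyc_coset n q (recip n x) /\ x < y.

Definition SR_asymmetric (n q x : nat) : Prop :=
  asymmetric_coset n q x /\
  exists y, min_rep n q y /\ cyc_coset n q y =i cyc_coset n q (recip n x) /\ y < x.

(* Main.v *)
Require Import Defs.
From mathcomp Require Import all_boot.
From mathcomp Require Import zify.

Section Aux.
Variable n : nat.
Hypothesis n_gt0 : 0 < n.

Definition ng w := (n - w %% n) %% n.

Lemma two u : u < n + n -> u %% n = 0 -> u = 0 \/ u = n.
Proof.
move=> lt H; have E := divn_eq u n; rewrite H addn0 in E.
have : u %/ n < 2 by rewrite ltn_divLR // mul2n -addnn.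
move: E; case: (u %/ n) => [|[|k]] //= E _; [left|right]; lia.
Qed.

Lemma ng_lt w : ng w < n.
Proof. by rewrite /ng ltn_pmod. Qed.

Lemma ng_sum w : (ng w + w) %% n = 0.
Proof.
rewrite /ng -modnDmr modnDml subnK ?modnn //.
by apply: ltnW; rewrite ltn_pmod.
Qed.

Lemma ng_char z w : z < n -> (z + w) %% n = 0 -> z = ng w.
Proof.
move=> zn; rewrite -modnDmr /ng.
have wl : w %% n < n by rewrite ltn_pmod.
move: wl; set w' := w %% n => wl H.
have [H0|H1] := two (z + w') ltac:(lia) H.
  have -> : w' = 0 by lia. by rewrite subn0 modnn; lia.
rewrite modn_small; lia.
Qed.

Lemma ngM w q : (ng w * q) %% n = ng (w * q).
Proof.
apply: ng_char; first by rewrite ltn_pmod.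
by rewrite modnDml -mulnDl -modnMml ng_sum mul0n mod0n.
Qed.

Lemma ng_mod w : ng (w %% n) = ng w.
Proof. by rewrite /ng modn_mod. Qed.

End Aux.

Theorem mainTheorem5 (q x : nat) :
  prime_power q ->
  min_rep (q ^ 2 - 1) q x ->
  let n := q ^ 2 - 1 in
  let r := (n - (x * q) %% n) %% n in
  [/\ FR_asymmetric n q x <-> x < r,
      symmetric_coset n q x <-> r = x
    & SR_asymmetric n q x <-> r < x].
Proof.
move=> [p [k [pp [k0 ->]]]] [xn xmin] n r.
set Q := p ^ k.
have {xn}xn : x < n := xn.
have {xmin}xmin : forall y, y \in cyc_coset n Q x -> x <= y := xmin.
have Q2 : 2 <= Q.
  have p2 := prime_gt1 pp. rewrite /Q.
  apply: (leq_trans p2); rewrite -{1}(expn1 p) leq_pexp2l //; lia.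
have n0 : 0 < n by rewrite /n; nia.
have nE : Q * Q = n + 1 by rewrite /n; nia.
set b := (x * Q) %% n.
have bn : b < n by rewrite ltn_pmod.
have bQ : (b * Q) %% n = x.
  by rewrite modnMml -mulnA nE mulnDr muln1 modnMDl modn_small.
have xb : x <= b by apply: xmin; rewrite unfold_in /cyc_coset /= eqxx orbT.
have x0b : (x == 0) = (b == 0).
  apply/eqP/eqP => [x0|H]; first by rewrite /b x0 mul0n mod0n.
  by rewrite -bQ H mul0n mod0n.
set a' := ng n x.
have rE : r = ng n b by rewrite /r /ng /b modn_mod.
have recE : recip n x = a' by rewrite /recip /a' /ng.
have a'n : a' < n by apply: ng_lt.
have rn : r < n by apply: ng_lt.
have rQ : (r * Q) %% n = a' by rewrite rE ngM // -ng_mod // bQ.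
have a'Q : (a' * Q) %% n = r by rewrite /a' ngM.
have bdef : (x * Q) %% n = b by [].
clearbody r b; clear nE; clearbody n.
have xC : cyc_coset n Q x =i [pred z | (z == x) || (z == b)].
  by move=> z; rewrite !inE unfold_in /cyc_coset /= modn_small // bdef.
have recC : cyc_coset n Q (recip n x) =i [pred z | (z == a') || (z == r)].
  by move=> z; rewrite recE !inE /cyc_coset /= a'Q modn_small.
have aE : a' = ng n x by [].
clearbody a' Q.
have ra' : r <= a'.
  rewrite rE aE /ng (modn_small xn) (modn_small bn).
  case: (posnP x) => [x0|xp].
    have : b == 0 by rewrite -x0b x0.
    by move/eqP=> ->; rewrite x0 subn0 modnn.
  have bp : 0 < b by move: xp; rewrite lt0n x0b -lt0n.
  rewrite !modn_small; clear -xp bp xb bn xn; lia.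
have yr : forall y, min_rep n Q y ->
    cyc_coset n Q y =i cyc_coset n Q (recip n x) -> y = r.
  move=> y [yn ymin] E.
  have : y \in cyc_coset n Q (recip n x).
    by rewrite -E unfold_in /cyc_coset /= modn_small // eqxx.
  rewrite recC inE => /orP[/eqP ya|/eqP //].
  have : y <= r by apply: ymin; rewrite E recC inE eqxx orbT.
  move=> yle; clear -ya ra' yle; lia.
have symE : symmetric_coset n Q x <-> r = x.
  rewrite /symmetric_coset; split.
    move=> S0.
    have S : forall z, ((z == a') || (z == r)) = ((z == x) || (z == b)).
      by move=> z; have := S0 z; rewrite recC xC !inE.
    have hx : (x == a') || (x == r) by rewrite S eqxx.
    have hb : (b == a') || (b == r) by rewrite S eqxx orbT.
    case/orP: hx => /eqP hx; last by [].
    have sx : (x + x) %% n = 0 by rewrite {1}hx aE ng_sum.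
    case/orP: hb => /eqP hb'.
      have xb' : b = x by rewrite hb' hx.
      by rewrite rE xb' -aE -hx.
    have sb : (b + b) %% n = 0 by rewrite {1}hb' rE ng_sum.
    have lx : x + x < n + n by clear -xn; lia.
    have lb : b + b < n + n by clear -bn; lia.
    have [e1|e1] := two n n0 _ lx sx; have [e2|e2] := two n n0 _ lb sb.
    - have x00 : x = 0 by clear -e1; lia.
      have b00 : b = 0 by clear -e2; lia.
      by rewrite -hb' b00 x00.
    - have x00 : x == 0 by apply/eqP; clear -e1; lia.
      by move: x00; rewrite x0b => /eqP; clear -e2 n0; lia.
    - have b00 : b == 0 by apply/eqP; clear -e2; lia.
      by move: b00; rewrite -x0b => /eqP; clear -e1 n0; lia.
    - by rewrite -hb'; clear -e1 e2; lia.
  move=> rx z; rewrite recC xC !inE.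
  have ab : a' = b.
    rewrite aE; apply/esym/ng_char => //. by rewrite -rx addnC rE ng_sum.
  by rewrite ab rx orbC.
have ry : x != r -> min_rep n Q r /\
    cyc_coset n Q r =i cyc_coset n Q (recip n x).
  move=> _; split.
    split=> // z; rewrite unfold_in /cyc_coset /= (modn_small rn) rQ.
    by case/orP=> /eqP ->.
  by move=> z; rewrite recC !inE /cyc_coset /= (modn_small rn) rQ orbC.
split=> //.
- rewrite /FR_asymmetric /asymmetric_coset; split.
    by move=> [_ [y [ym [ye xy]]]]; rewrite -(yr y ym) // => z; rewrite ye.
  move=> xr; split; first by rewrite symE; clear -xr; lia.
  have [h1 h2] := ry ltac:(apply/eqP; clear -xr; lia).
  by exists r.
- rewrite /SR_asymmetric /asymmetric_coset; split.
    by move=> [_ [y [ym [ye xy]]]]; rewrite -(yr y ym) // => z; rewrite ye.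
  move=> xr; split; first by rewrite symE; clear -xr; lia.
  have [h1 h2] := ry ltac:(apply/eqP; clear -xr; lia).
  by exists r.
Qed.
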